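(* Let $m\ge2$, $\alpha,\beta\in\mathbb C$, and let $A_{\alpha,\beta}$ be the $m\times m$ tridiagonal matrix with ones on the sub- and superdiagonal, $(1,1)$ entry $\alpha$, $(m,m)$ entry $\beta$, and zeros elsewhere. For $1\le i\le m-1$ let $$P_i^{(\alpha,\beta)}=T_m(z^i+z^{-i})+H_i^{(\alpha)}+J_mH_i^{(\beta)}J_m,$$ and $P_0^{(\alpha,\beta)}=I_m$. Then for every $n=1,\ldots,m-1$, $$A_{\alpha,\beta}^n=\sum_{i=0}^{\lfloor (n-1)/2\rfloor}\binom{n}{i}P_{n-2i}^{(\alpha,\beta)}+\varphi_nI_m,$$ where $\varphi_n=0$ if $n$ is odd and $\varphi_n=\binom{n}{n/2}$ if $n$ is even.
   Context: $I_m$ is the $m\times m$ identity and $J_m$ the $m\times m$ permutation matrix with ones on the anti-diagonal. $T_m(z^i+z^{-i})$ is the $m\times m$ symmetric Toeplitz matrix with ones on the $i$-th super- and subdiagonal and zeros elsewhere. For $\gamma\in\mathbb C$, let $\theta_\gamma=\gamma^2-1$, $h_1^{\gamma}(z)=\gamma z$ and $h_n^{\gamma}(z)=\theta_\gamma\sum_{j=1}^{n-1}\gamma^{n-j-1}z^j+\gamma z^n$ for $n\ge2$; $H_i^{(\gamma)}$ is the $m\times m$ Hankel matrix whose $(k,l)$ entry is the coefficient of $z^{k+l-1}$ in $h_i^{\gamma}(z)$ (i.e. the leading $m\times m$ principal submatrix of the semi-infinite Hankel matrix with first column the coefficient vector of $h_i^\gamma$). *)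

(* Defs.v *)
From HB Require Import structures.
From mathcomp Require Import all_boot all_order all_algebra.
From mathcomp Require Export complex.
Set Implicit Arguments. Unset Strict Implicit. Unset Printing Implicit Defensive.
Import Order.TTheory GRing.Theory Num.Theory.
Local Open Scope ring_scope.

Section Defs.
Variable (C : comNzRingType).

(* A_{alpha,beta}: tridiagonal, (1,1) = alpha, (m,m) = beta (0-indexed: (0,0), (m-1,m-1)). *)
Definition Aab (m : nat) (a b : C) : 'M[C]_m :=
  \matrix_(k < m, l < m)
    if k == l :> nat then
      (if k == 0%N :> nat then a else if k == m.-1 :> nat then b else 0)
    else (((k.+1 == l :> nat) || (l.+1 == k :> nat))%:R : C).

(* T_m(z^i + z^-i) *)
Definition Tsym (m i : nat) : 'M[C]_m :=
  \matrix_(k < m, l < m) (((k + i == l)%N || (l + i == k)%N)%:R : C).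

Definition Jm (m : nat) : 'M[C]_m :=
  \matrix_(k < m, l < m) ((k + l == m.-1)%N%:R : C).

Definition theta (g : C) : C := g ^+ 2 - 1.

Definition hpoly (g : C) (n : nat) : {poly C} :=
  if n == 1%N then g *: 'X
  else theta g *: (\sum_(1 <= j < n) (g ^+ (n - j - 1)) *: 'X^j) + g *: 'X^n.

(* H_i^{(gamma)}: (k,l) entry (1-indexed) = coef of z^{k+l-1}; 0-indexed: z^{k+l+1} *)
Definition Hank (m : nat) (g : C) (i : nat) : 'M[C]_m :=
  \matrix_(k < m, l < m) (hpoly g i)`_(k + l + 1).

Definition Pab (m : nat) (a b : C) (i : nat) : 'M[C]_m :=
  if i == 0%N then 1%:M
  else Tsym m i + Hank m a i + Jm m *m Hank m b i *m Jm m.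

Definition phin (n : nat) : C := if odd n then 0 else ('C(n, n./2))%:R.
End Defs.

(* Main.v *)
Require Import Defs.
From HB Require Import structures.
From mathcomp Require Import all_boot all_order all_algebra.
From mathcomp Require Import complex.
From mathcomp Require Import ring zify.
Import Order.TTheory GRing.Theory Num.Theory.
Set Implicit Arguments. Unset Strict Implicit.
Local Open Scope ring_scope.



Section Scal.
Variable C : comNzRingType.
Implicit Types g : C.

Definition hc g (k t : nat) : C :=
  if (0 < t < k)%N then theta g * g ^+ (k - t - 1)
  else if t == k then g else 0.

Lemma sum_delta (F : nat -> C) (lo hi c : nat) :
  \sum_(lo <= s < hi) ((s == c)%:R * F s) = if (lo <= c < hi)%N then F c else 0.
Proof.
elim: hi => [|hi IH]; first by rewrite big_geq // ; case: ifP => //; lia.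
case: (leqP lo hi) => H.
  rewrite big_nat_recr //= IH.
  case: (eqVneq hi c) => [<-|Hne].
    have -> : (lo <= hi < hi)%N = false by lia.
    have -> : (lo <= hi < hi.+1)%N = true by lia.
    by rewrite mul1r add0r.
  rewrite mul0r addr0; case: ifP => H1; case: ifP => H2 //; lia.
rewrite big_geq //; case: ifP => //; lia.
Qed.

Lemma hpoly_coef g k t : (1 <= k)%N -> (hpoly g k)`_t = hc g k t.
Proof.
move=> Hk; rewrite /hpoly /hc.
case: eqP => [->|/eqP Hk1].
  rewrite coefZ coefX; case: t => [|[|t]] //=; rewrite ?mulr0 ?mulr1 //.
rewrite coefD !coefZ coefXn coef_sum.
under eq_bigr => j _ do rewrite coefZ coefXn.
have -> : \sum_(1 <= i < k) g ^+ (k - i - 1) * (t == i)%:R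
        = \sum_(1 <= i < k) (i == t)%:R * g ^+ (k - i - 1).
  by apply: eq_bigr => i _; rewrite mulrC eq_sym.
rewrite sum_delta.
case: ifP => H1.
  have : (t == k) = false by apply/negbTE; lia.
  by move=> ->; rewrite mulr0 addr0.
rewrite mulr0 add0r; case: eqP => _; by rewrite ?mulr1 ?mulr0.
Qed.

Lemma hc_gt g k t : (k < t)%N -> hc g k t = 0.
Proof. move=> H; rewrite /hc ifF; last lia. by rewrite ifF //; apply/negbTE; lia. Qed.

Lemma hc0 g k : hc g k 0 = 0 \/ k = 0%N.
Proof. rewrite /hc /=; case: eqP => [<-|]; by [right|left]. Qed.

End Scal.



Ltac normexp := repeat first [
  match goal with |- context[?g ^+ ?e1] => (assert_fails (constr_eq e1 0%N)); let H := fresh in (assert (H : e1 = 0%N) by lia); rewrite H expr0; clear H end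
| match goal with |- context[?g ^+ ?e1] => match goal with |- context[g ^+ ?e2] => (assert_fails (constr_eq e1 e2)); let H := fresh in (assert (H : e1 = e2) by lia); rewrite H; clear H end end
| match goal with |- context[?g ^+ ?e1] => match goal with |- context[g ^+ ?e2] => let H := fresh in (assert (H : e1 = e2.+1) by lia); rewrite H exprS; clear H end end
| match goal with |- context[?g ^+ ?e1] => match goal with |- context[g ^+ ?e2] => let H := fresh in (assert (H : e1 = e2.+2) by lia); rewrite H !exprS; clear H end end
| match goal with |- context[?g ^+ ?e1] => (assert_fails (constr_eq e1 1%N)); let H := fresh in (assert (H : e1 = 1%N) by lia); rewrite H expr1; clear H end ].

Section Scal.
Variable C : comNzRingType.
Implicit Types g : C.

Lemma L1 g k t : (1 <= k)%N -> (2 <= t)%N ->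
  hc g k t.-1 + hc g k t.+1 = hc g k.+1 t + hc g k.-1 t.
Proof.
move=> Hk Ht; rewrite /hc.
repeat (case: ifP => ?); try (exfalso; lia).
all: normexp; rewrite /theta /=; ring.
Qed.

Lemma L2 g k t : (1 <= k)%N -> (1 <= t)%N ->
  hc g k t.+1 + g * (t == k.+1)%:R + g * hc g k t = hc g k.+1 t + (t == k)%:R + hc g k.-1 t.
Proof.
move=> Hk Ht; rewrite /hc.
repeat (case: ifP => ?); try (exfalso; lia).
all: repeat (case: eqP => ?); try (exfalso; lia).
all: normexp; rewrite /theta /=; try ring.
Qed.
Lemma L1s g k t : (1 <= k)%N -> (2 <= t)%N ->
  hc g k.+1 t = hc g k t.-1 + hc g k t.+1 - hc g k.-1 t.
Proof. by move=> *; rewrite (L1 g) // addrK. Qed.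
Lemma L2s g k t : (1 <= k)%N -> (1 <= t)%N ->
  hc g k.+1 t = hc g k t.+1 + g * (t == k.+1)%:R + g * hc g k t - (t == k)%:R - hc g k.-1 t.
Proof. by move=> *; rewrite (L2 g) //; ring. Qed.
End Scal.



Section Mat.
Variable C : comNzRingType.
Variables (m : nat) (a b : C).
Hypothesis Hm : (2 <= m)%N.

Definition Pent (k r l : nat) : C :=
  if k == 0%N then (r == l)%:R
  else ((r + k == l)%N || (l + k == r)%N)%:R + hc a k (r + l + 1)
       + hc b k (m.-1 - r + (m.-1 - l) + 1).

Lemma Jm_mull (M : 'M[C]_m) i j : (Jm C m *m M) i j = M (rev_ord i) j.
Proof.
rewrite mxE (bigD1 (rev_ord i)) //=.
rewrite big1 ?addr0.
  rewrite mxE /=.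
  have -> : (i + (m - i.+1) == m.-1)%N by apply/eqP; have := ltn_ord i; lia.
  by rewrite mul1r.
move=> k Hk; rewrite mxE; have -> : (i + k == m.-1)%N = false.
  apply/negbTE; apply: contra Hk => /eqP H; apply/eqP/val_inj => /=; have := ltn_ord i; lia.
by rewrite mul0r.
Qed.

Lemma Jm_mulr (M : 'M[C]_m) i j : (M *m Jm C m) i j = M i (rev_ord j).
Proof.
rewrite mxE (bigD1 (rev_ord j)) //=.
rewrite big1 ?addr0.
  rewrite mxE /=.
  have -> : (m - j.+1 + j == m.-1)%N by apply/eqP; have := ltn_ord j; lia.
  by rewrite mulr1.
move=> k Hk; rewrite mxE; have -> : (k + j == m.-1)%N = false.
  apply/negbTE; apply: contra Hk => /eqP H; apply/eqP/val_inj => /=; have := ltn_ord j; lia.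
by rewrite mulr0.
Qed.

Lemma Pab_E k : Pab m a b k = \matrix_(i, j) Pent k i j.
Proof.
apply/matrixP => i j; rewrite /Pab /Pent !mxE.
case: ifP => Hk; first by rewrite mxE.
idtac.
rewrite [X in X = _]mxE [X in X + _]mxE Jm_mulr Jm_mull !mxE !hpoly_coef ?lt0n ?Hk //.
have -> : (rev_ord i + rev_ord j + 1 = m.-1 - i + (m.-1 - j) + 1)%N by rewrite /=; lia.
by [].
Qed.
Definition Gf (f : nat -> nat -> C) (r l : nat) : C :=
  (0 < l)%:R * f r l.-1 + (l.+1 < m)%:R * f r l.+1
  + (l == 0%N)%:R * a * f r l + (l == m.-1)%:R * b * f r l.

Lemma mulA_E (f : nat -> nat -> C) :
  (\matrix_(i < m, j < m) f i j : 'M[C]_m) *m Aab m a b = \matrix_(i < m, j < m) Gf f i j.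
Proof.
apply/matrixP => i j; rewrite !mxE.
under eq_bigr => s _ do rewrite !mxE.
rewrite -(big_mkord xpredT (fun s => f i s * (if s == j :> nat
           then if s == 0%N :> nat then a else if s == m.-1 :> nat then b else 0
           else ((s.+1 == j :> nat) || (j.+1 == s :> nat))%:R))).
move: (nat_of_ord j) (ltn_ord j) => {}j Hj.
move: (nat_of_ord i) => {}i.
have -> : \sum_(0 <= s < m) f i s * (if s == j
           then if s == 0%N then a else if s == m.-1 then b else 0
           else ((s.+1 == j) || (j.+1 == s))%:R)
  = \sum_(0 <= s < m) ((s == j.-1)%:R * ((0 < j)%:R * f i s) + (s == j.+1)%:R * f i s
      + (s == j)%:R * ((j == 0%N)%:R * a * f i s) + (s == j)%:R * ((j == m.-1)%:R * b * f i s)).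
  apply: eq_big_nat => s Hs.
  case: (eqVneq s j) => [Esj|Nsj].
    subst s.
    case: (eqVneq j 0%N) => [->|Nj0] /=.
      have -> : (0 == m.-1)%N = false by apply/negbTE; lia.
      rewrite /=; ring.
    have -> : (j == j.-1) = false by apply/negbTE; lia.
    have -> : (j == j.+1) = false by apply/negbTE; lia.
    case: eqP => _ /=; ring.
  idtac.
  case: (eqVneq s j.-1) => [E1|N1]; case: (eqVneq s j.+1) => [E2|N2];
  case: (eqVneq s.+1 j) => [E3|N3]; case: (eqVneq j.+1 s) => [E4|N4]; try (exfalso; lia);
  try (have -> : (0 < j)%N = true by lia); rewrite /= ?orbT ?orbF; ring.
rewrite !big_split /= !sum_delta /Gf.
have -> : (0 <= j.-1 < m)%N by lia.
have -> : (0 <= j < m)%N by lia.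
have -> : (0 <= j.+1 < m)%N = (j.+1 < m)%N by lia.
case: ifP => _; rewrite /=; ring.
Qed.
Ltac killgt := repeat match goal with |- context[hc ?g ?k ?t] =>
   let H := fresh in assert (H : (k < t)%N) by lia; rewrite (hc_gt g H); clear H end.

Ltac boolcases := repeat match goal with |- context[(?x == ?y)%N] =>
   case: (eqVneq x y) => ?; try (exfalso; lia) end.

Lemma rec_entry k r l : (1 <= k)%N -> (k.+1 <= m.-1)%N -> (r < m)%N -> (l < m)%N ->
  Gf (Pent k) r l = Pent k.+1 r l + (if k == 1%N then 2 else 1) * Pent k.-1 r l.
Proof.
move=> Hk Hkm Hr Hl; rewrite /Gf /Pent.
have -> : (k == 0%N) = false by lia.
rewrite /=.
case: (eqVneq l 0%N) => [El|Nl].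
  subst l.
  have -> : (1 < m)%N = true by lia.
  have -> : (0 == m.-1)%N = false by lia.
  rewrite /=.
  have -> : (r + 1 + 1 = r.+2)%N by lia.
  have -> : (r + 0 + 1 = r.+1)%N by lia.
  rewrite (L2s a (t := r.+1)) //.
  killgt.
  case: (eqVneq k 1%N) => [Ek|Nk].
    subst k; rewrite /=; killgt; boolcases; rewrite /= ?orbT ?orbF; ring.
  have -> : (k.-1 == 0)%N = false by lia.
  killgt; boolcases; rewrite /= ?orbT ?orbF; ring.
case: (eqVneq l m.-1) => [El|Nl1].
  subst l.
  have -> : (0 < m.-1)%N = true by lia.
  have -> : ((m.-1).+1 < m)%N = false by lia.
  have -> : (m.-1 - r + (m.-1 - (m.-1).-1) + 1 = (m.-1 - r).+2)%N by lia.
  have -> : (m.-1 - r + (m.-1 - m.-1) + 1 = (m.-1 - r).+1)%N by lia.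
  rewrite (L2s b (t := (m.-1 - r).+1)) //.
  killgt.
  case: (eqVneq k 1%N) => [Ek|Nk].
    subst k; rewrite /=; killgt; boolcases; rewrite /= ?orbT ?orbF; ring.
  have -> : (k.-1 == 0)%N = false by lia.
  killgt; boolcases; rewrite /= ?orbT ?orbF; ring.
have -> : (0 < l)%N = true by lia.
have -> : (l.+1 < m)%N = true by lia.
rewrite ?(negbTE Nl) ?(negbTE Nl1) /=.
have -> : (r + l.-1 + 1 = (r + l + 1).-1)%N by lia.
have -> : (r + l.+1 + 1 = (r + l + 1).+1)%N by lia.
have -> : (m.-1 - r + (m.-1 - l.-1) + 1 = (m.-1 - r + (m.-1 - l) + 1).+1)%N by lia.
have -> : (m.-1 - r + (m.-1 - l.+1) + 1 = (m.-1 - r + (m.-1 - l) + 1).-1)%N by lia.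
rewrite (L1s a (t := r + l + 1)) ?(L1s b (t := m.-1 - r + (m.-1 - l) + 1)) //; try lia.
case: (eqVneq k 1%N) => [Ek|Nk].
  subst k; rewrite /=; killgt; boolcases; rewrite /= ?orbT ?orbF; ring.
have -> : (k.-1 == 0)%N = false by lia.
boolcases; rewrite /= ?orbT ?orbF; ring.
Qed.
Lemma A_P1 : Aab m a b = Pab m a b 1.
Proof.
rewrite Pab_E; apply/matrixP => i j; rewrite !mxE /Pent /= /hc /=.
move: (nat_of_ord i) (ltn_ord i) (nat_of_ord j) (ltn_ord j) => {}i Hi {}j Hj.
have H0 : forall t, (0 < t < 1)%N = false by move=> t; lia.
rewrite !H0.
boolcases; rewrite /= ?orbT ?orbF; ring.
Qed.

Definition dd (k : nat) : C := if k == 0%N then 0 else if k == 1%N then 2 else 1.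

Lemma rec_mat k : (k.+1 <= m.-1)%N ->
  Pab m a b k *m Aab m a b = Pab m a b k.+1 + dd k *: Pab m a b k.-1.
Proof.
move=> Hk.
case: (eqVneq k 0%N) => [->|Nk].
  by rewrite /dd /= scale0r addr0 {1}/Pab /= mul1mx A_P1.
rewrite Pab_E mulA_E; apply/matrixP => i j.
rewrite !Pab_E !mxE rec_entry //; try lia.
rewrite /dd (negbTE Nk); case: ifP => _; ring.
Qed.
End Mat.



Definition cc (n k : nat) : nat :=
  if (k <= n)%N && ~~ odd (n + k) then 'C(n, (n - k)./2) else 0%N.

Lemma cc_gt n k : (n < k)%N -> cc n k = 0%N.
Proof. by move=> H; rewrite /cc ifF //; lia. Qed.

Lemma pascal0 n : cc n.+1 0 = (2 * cc n 1)%N.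
Proof.
rewrite /cc.
case: (boolP (odd n)) => Hn.
  have [j Ej] : exists j, n = j.*2.+1 by exists n./2; lia.
  subst n.
  have -> : ((0 <= j.*2.+2) && ~~ odd (j.*2.+2 + 0))%N by lia.
  have -> : ((1 <= j.*2.+1) && ~~ odd (j.*2.+1 + 1))%N by lia.
  have -> : ((j.*2.+2 - 0)./2 = j.+1)%N by lia.
  have -> : ((j.*2.+1 - 1)./2 = j)%N by lia.
  rewrite binS.
  have -> : 'C(j.*2.+1, j.+1) = 'C(j.*2.+1, j).
    have -> : (j.+1 = j.*2.+1 - j)%N by lia.
    by rewrite bin_sub //; lia.
  lia.
rewrite ifF; last lia.
by rewrite ifF; last lia.
Qed.

Lemma pascalS n k : cc n.+1 k.+1 = (cc n k + cc n k.+2)%N.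
Proof.
rewrite /cc.
case: (boolP (odd (n + k))) => Hp.
  by rewrite !ifF //; lia.
case: (leqP k n) => Hkn; last first.
  by rewrite !ifF //; lia.
have -> : ((k.+1 <= n.+1) && ~~ odd (n.+1 + k.+1))%N by lia.
rewrite /=.
case: (eqVneq n k) => [Enk|Nnk].
  subst k. rewrite ifF; last lia.
  have -> : ((n.+1 - n.+1)./2 = 0)%N by lia.
  idtac.
  by rewrite !bin0.
have -> : ((k.+2 <= n) && ~~ odd (n + k.+2))%N by lia.
have [j Ej] : exists j, ((n - k)./2 = j.+1)%N by exists ((n - k)./2).-1; lia.
have -> : ((n.+1 - k.+1)./2 = j.+1)%N by lia.
have -> : ((n - k.+2)./2 = j)%N by lia.
by rewrite binS.
Qed.

Section Main.
Variable C : comNzRingType.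
Variables (m : nat) (a b : C).
Hypothesis Hm : (2 <= m)%N.

Local Notation P := (Pab m a b).
Local Notation A := (Aab m a b).

Definition Q n : 'M[C]_m := \sum_(0 <= k < m) (cc n k)%:R *: P k.

Lemma Q0 : Q 0 = 1%:M.
Proof.
rewrite /Q; case: m Hm => [|m'] // _.
rewrite big_nat_recl // big1_seq ?addr0.
  by rewrite /cc /= scale1r /Pab.
move=> k /andP[_]; rewrite mem_iota => _.
by rewrite cc_gt // scale0r.
Qed.

Lemma QS n : (n.+1 <= m.-1)%N -> Q n.+1 = Q n *m A.
Proof.
move=> Hn; rewrite /Q mulmx_suml.
have -> : \sum_(0 <= k < m) (cc n k)%:R *: P k *m A
    = \sum_(0 <= k < m) ((cc n k)%:R *: P k.+1 + ((cc n k)%:R * dd C k) *: P k.-1).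
  apply: eq_big_nat => k Hk.
  case: (leqP k n) => Hkn.
    by rewrite -scalemxAl rec_mat //; try lia; rewrite scalerDr scalerA.
  by rewrite cc_gt // !scale0r mul0r scale0r mul0mx addr0.
rewrite big_split /=.
case: m Hm Hn => [|[|m']] // Hm' Hn'.
have E1 : \sum_(0 <= k < m'.+2) (cc n k)%:R *: Pab m'.+2 a b k.+1
        = \sum_(0 <= k < m'.+1) (cc n k)%:R *: Pab m'.+2 a b k.+1.
  by rewrite big_nat_recr //= cc_gt ?scale0r ?addr0 //; lia.
have E2 : \sum_(0 <= k < m'.+2) ((cc n k)%:R * dd C k) *: Pab m'.+2 a b k.-1
        = (2 * (cc n 1)%:R) *: Pab m'.+2 a b 0 + \sum_(0 <= k < m') (cc n k.+2)%:R *: Pab m'.+2 a b k.+1.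
  rewrite big_nat_recl // big_nat_recl //= /dd /= mulr0 scale0r add0r mulrC.
  congr (_ + _); apply: eq_big_nat => k Hk; by rewrite mulr1.
have E3 : \sum_(0 <= k < m'.+2) (cc n.+1 k)%:R *: Pab m'.+2 a b k
        = (2 * (cc n 1)%:R) *: Pab m'.+2 a b 0 + (\sum_(0 <= k < m'.+1) (cc n k)%:R *: Pab m'.+2 a b k.+1
           + \sum_(0 <= k < m') (cc n k.+2)%:R *: Pab m'.+2 a b k.+1).
  rewrite big_nat_recl // pascal0 natrM.
  have -> : \sum_(0 <= k < m'.+1) (cc n.+1 k.+1)%:R *: Pab m'.+2 a b k.+1
     = \sum_(0 <= k < m'.+1) (cc n k)%:R *: Pab m'.+2 a b k.+1 + \sum_(0 <= k < m'.+1) (cc n k.+2)%:R *: Pab m'.+2 a b k.+1.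
    rewrite -big_split; apply: eq_big_nat => k Hk; by rewrite pascalS natrD scalerDl.
  congr (_ + (_ + _)).
  by rewrite big_nat_recr //= cc_gt ?scale0r ?addr0 //; lia.
rewrite E1 E2 E3.
by rewrite addrCA.
Qed.

Lemma powA n : (n <= m.-1)%N -> A ^+ n = Q n.
Proof.
elim: n => [|n IH] Hn; first by rewrite expr0 Q0.
by rewrite exprSr IH ?QS //; lia.
Qed.

Lemma sum_delta_mx (F : nat -> 'M[C]_m) (lo hi c : nat) :
  \sum_(lo <= s < hi) ((s == c)%:R *: F s) = if (lo <= c < hi)%N then F c else 0.
Proof.
elim: hi => [|hi IH]; first by rewrite big_geq // ; case: ifP => //; lia.
case: (leqP lo hi) => H.
  rewrite big_nat_recr //= IH.
  case: (eqVneq hi c) => [<-|Hne].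
    have -> : (lo <= hi < hi)%N = false by lia.
    have -> : (lo <= hi < hi.+1)%N = true by lia.
    by rewrite scale1r add0r.
  rewrite scale0r addr0; case: ifP => H1; case: ifP => H2 //; lia.
rewrite big_geq //; case: ifP => //; lia.
Qed.

Lemma coefC n k : (1 <= n)%N ->
  \sum_(0 <= j < (n.-1)./2.+1) ('C(n, j))%:R * ((k == n - 2 * j)%N%:R : C)
  + phin C n * (k == 0%N)%:R = (cc n k)%:R.
Proof.
move=> Hn.
have -> : \sum_(0 <= j < (n.-1)./2.+1) ('C(n, j))%:R * ((k == n - 2 * j)%N%:R : C)
   = \sum_(0 <= j < (n.-1)./2.+1) (j == (n - k)./2)%:R *
        ((((0 < k) && (k <= n) && ~~ odd (n + k))%N)%:R * ('C(n, j))%:R : C).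
  apply: eq_big_nat => j Hj.
  case: (eqVneq k (n - 2 * j)%N) => [Ek|Nk].
    have -> : (j == (n - k)./2) = true by lia.
    have -> : ((0 < k) && (k <= n) && ~~ odd (n + k))%N = true by lia.
    by rewrite /= ?mulr1n ?mulr0n ?mulr0 ?mul0r ?mulr1 ?mul1r.
  case: (eqVneq j (n - k)./2) => [Ej|Nj].
    have -> : ((0 < k) && (k <= n) && ~~ odd (n + k))%N = false by lia.
    by rewrite /= ?mulr1n ?mulr0n ?mulr0 ?mul0r ?mulr1 ?mul1r.
  by rewrite /= ?mulr1n ?mulr0n ?mulr0 ?mul0r ?mulr1 ?mul1r.
rewrite sum_delta /phin /cc.
case: (eqVneq k 0%N) => [->|Nk].
  rewrite subn0 addn0 /=; case: ifP => _; case: (odd n); rewrite /= ?mulr0n ?mulr1n ?mul0r ?mulr1 ?add0r ?addr0 //.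
idtac.
rewrite mulr0 addr0.
case: (boolP ((0 < k) && (k <= n) && ~~ odd (n + k))%N) => Hc.
  have -> : (0 <= (n - k)./2 < (n.-1)./2.+1)%N = true by lia.
  have -> : ((k <= n) && ~~ odd (n + k))%N = true by lia.
  by rewrite mul1r.
have -> : ((k <= n) && ~~ odd (n + k))%N = false by lia.
by rewrite mul0r; case: ifP.
Qed.

Lemma Qform n : (1 <= n <= m.-1)%N ->
  Q n = \sum_(0 <= j < (n.-1)./2.+1) ('C(n, j))%:R *: P (n - 2 * j) + phin C n *: 1%:M.
Proof.
move=> /andP[Hn1 Hn2].
have Pd : forall c, (c < m)%N -> P c = \sum_(0 <= k < m) ((k == c)%:R *: P k).
  by move=> c Hc; rewrite sum_delta_mx; case: ifP => //; lia.
have -> : (1%:M : 'M[C]_m) = P 0 by [].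
rewrite (Pd 0%N) ?scaler_sumr; last lia.
have -> : \sum_(0 <= j < (n.-1)./2.+1) ('C(n, j))%:R *: P (n - 2 * j)
   = \sum_(0 <= j < (n.-1)./2.+1) \sum_(0 <= k < m) (('C(n, j))%:R * (k == n - 2 * j)%N%:R) *: P k.
  apply: eq_big_nat => j Hj; rewrite (Pd (n - 2 * j)%N) ?scaler_sumr; last lia.
  by apply: eq_bigr => k _; rewrite scalerA.
rewrite exchange_big /= -big_split /= /Q.
apply: eq_big_nat => k Hk.
rewrite scalerA -scaler_suml -scalerDl coefC //.
Qed.
End Main.

Local Open Scope complex_scope.

Theorem mainTheorem10 (R : rcfType) (m : nat) (a b : R[i]) :
  (2 <= m)%N ->
  forall n : nat, (1 <= n <= m.-1)%N ->
    (Aab m a b) ^+ n =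
      \sum_(0 <= j < (n.-1)./2.+1) ('C(n, j))%:R *: Pab m a b (n - 2 * j)
      + phin R[i] n *: 1%:M.
Proof.
move=> Hm n Hn.
rewrite (@powA _ m a b Hm n); last by case/andP: Hn.
exact: Qform.
Qed.
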